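(* In the setting described in the context, the graph $K$ has no parallel edges: no pair $\{q,q'\}$ of representatives is added to $F$ on account of two distinct source edges of $E_i$.
   Context: Let $G=(V,E)$ be a connected undirected graph on $n$ vertices with positive integer edge weights $w$ and a unique minimum spanning tree $Z$. Fix an integer $k\ge 2$, $\varepsilon>0$, $t=(2k-1)(1+\varepsilon)$, and let $H$ be the greedy spanner: starting from $H=(V,\emptyset)$, the edges of $E$ are processed in non-decreasing order of weight and $\{u,v\}$ is added to $H$ iff currently $d_H(u,v)>t\cdot w(u,v)$. Order the vertices $v_1,\dots,v_n$ by a preorder traversal of $Z$ and let $L=\sum_{j=2}^n d_Z(v_{j-1},v_j)$. Fix $i\in\{1,\dots,\lceil\log_k n\rceil\}$, set $a=k^{i-1}L/n$, and let $E_i=\{e\in E(H)\setminus E(Z): a<w(e)\le ka\}$. View $Z$ as a metric tree (each edge of weight $x$ is a segment of length $x$) and let $d_Z$ denote distance in it. Let $P=(p_0,\dots,p_L)$ be a path with unit-length edges, where $v_1=p_0$ and $v_j=p_{\ell_j}$ with $\ell_1=0$, $\ell_j=\ell_{j-1}+d_Z(v_{j-1},v_j)$; each point $p_h$ with $\ell_{j-1}\le h\le \ell_j$ is identified with the point of $Z$ on the $Z$-path from $v_{j-1}$ to $v_j$ at distance $h-\ell_{j-1}$ from $v_{j-1}$ (Steiner points subdividing edges of $Z\subseteq H$). Set $s=8L/(\varepsilon a)$, assumed (by scaling) to be such that $s$ and $L/s=\varepsilon a/8$ are integers. For $j\in[s]$ the interval $I_j$ is $\{p_{(j-1)L/s},\dots,p_{jL/s}\}$,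 and $r_j$ is an arbitrarily chosen interior point of $I_j$; $R=\{r_1,\dots,r_s\}$. For an integer $b\ge 0$, $N_b(j)=\{r_h: h\in[s], |j-h|\le b\}$. The multigraph $K=(R,F)$ is defined as follows: for each $e=\{u,v\}\in E_i$ with $u\in I_h$, $v\in I_j$, let $b=\lfloor w(e)/a\rfloor$ and let $M$ be an arbitrary maximal matching between $N_b(h)$ and $N_b(j)$; all edges of $M$ are added to $F$, and for each $\{q,q'\}\in M$ with $q\in N_b(h)$, $q'\in N_b(j)$, the edge $\{u,v\}$ is called its source, written $S(q,q')=(u,v)$. *)

(* Defs.v *)
From mathcomp Require Import all_boot all_order all_algebra.
Set Implicit Arguments. Unset Strict Implicit. Unset Printing Implicit Defensive.
Import Order.TTheory GRing.Theory Num.Theory.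

Section Graphs.
Variable V : finType.
(* An (undirected) edge is a 2-element set of vertices; weights on edges. *)
Variable wt : {set V} -> nat.

Definition walk (F : {set {set V}}) (x : V) (s : seq V) : bool :=
  path (fun a b => [set a; b] \in F) x s.

Definition wsum (x : V) (s : seq V) : nat :=
  \sum_(p <- zip (x :: s) s) wt [set p.1; p.2].

Definition simple_graph (E : {set {set V}}) : Prop :=
  forall e, e \in E -> #|e| = 2.

Definition connected (F : {set {set V}}) : Prop :=
  forall x y, exists s, walk F x s /\ last x s = y.

(* weighted distance d_F(x,y) > c, where d_F is the minimum weight of a
   walk in F from x to y (+oo if there is none) *)
Definition dist_gt {R : numDomainType} (F : {set {set V}}) (x y : V) (c : R) : Prop :=
  forall s, walk F x s -> last x s = y -> (c < (wsum x s)%:R)%R.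

Definition spanning_tree (E T : {set {set V}}) : Prop :=
  T \subset E /\ connected T /\ #|T| = #|V|.-1.

Definition tweight (T : {set {set V}}) : nat := \sum_(e in T) wt e.

Definition unique_MST (E Z : {set {set V}}) : Prop :=
  spanning_tree E Z /\
  forall T, spanning_tree E T -> T != Z -> tweight Z < tweight T.

(* H is the output of the greedy t-spanner algorithm when the edges of E are
   processed in the order sq (a non-decreasing-by-weight enumeration of E):
   the k-th edge {x,y} is added iff d_{H_k}(x,y) > t * w(x,y), where H_k is
   the set of edges added before it. *)
Definition greedy_spanner {R : numDomainType} (t : R) (E : {set {set V}})
    (sq : seq {set V}) (H : {set {set V}}) : Prop :=
  [/\ perm_eq sq (enum E), sorted (fun e f => wt e <= wt f) sq,
      H \subset E &
      forall k, k < size sq ->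
        (nth set0 sq k \in H <->
         forall x y, nth set0 sq k = [set x; y] ->
           dist_gt [set f in H | index f sq < k] x y (t * (wt (nth set0 sq k))%:R)%R)].

Definition tree_dist (Z : {set {set V}}) (a b : V) (d : nat) : Prop :=
  exists s, [/\ walk Z a s, last a s = b, uniq (a :: s) & wsum a s = d].

Definition point_on_path (Z : {set {set V}}) (a b u : V) (delta : nat) : Prop :=
  exists s1 s2, [/\ walk Z a s1 /\ last a s1 = u, walk Z u s2 /\ last u s2 = b,
                    uniq (a :: s1 ++ s2) & wsum a s1 = delta].

Definition descendant (Z : {set {set V}}) (r x y : V) : Prop :=
  exists s, [/\ walk Z r s, last r s = y, uniq (r :: s) & x \in r :: s].

(* vs is a preorder traversal of the tree Z (rooted at its first vertex):
   a listing of all vertices in which, for every vertex x, the vertices of the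
   subtree of x form a contiguous block starting at x. *)
Definition preorder (Z : {set {set V}}) (vs : seq V) : Prop :=
  [/\ uniq vs, size vs = #|V| &
      forall r, head r vs = r ->
      forall x, exists c, forall j, j < size vs ->
        (descendant Z r x (nth x vs j) <->
         index x vs <= j < index x vs + c)].

(* the path P: vertex u is identified with the point p_x of P *)
Definition on_P (Z : {set {set V}}) (vs : seq V) (ell : nat -> nat) (u : V) (x : nat) : Prop :=
  exists j, [/\ j.+1 < size vs, ell j <= x <= ell j.+1 &
             point_on_path Z (nth u vs j) (nth u vs j.+1) u (x - ell j)].

(* u lies in the interval I_h = {p_{(h-1)m}, ..., p_{hm}}, where m = L/s *)
Definition in_I (Z : {set {set V}}) (vs : seq V) (ell : nat -> nat) (m h : nat) (u : V) : Prop :=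
  exists x, (h.-1 * m <= x <= h * m) /\ on_P Z vs ell u x.
End Graphs.

(* N_b(j), representatives identified with their indices 1..s *)
Definition Nb (s : nat) (b : int) (j : nat) : pred nat :=
  fun h => (1 <= h <= s) && (`|(h%:Z - j%:Z)%R| <= b)%R.

Definition matching (A B : pred nat) (M : seq (nat * nat)) : Prop :=
  [/\ uniq M,
      forall p, p \in M -> [/\ A p.1, B p.2 & p.1 != p.2] &
      forall p p', p \in M -> p' \in M -> p != p' ->
        [/\ p.1 != p'.1, p.1 != p'.2, p.2 != p'.1 & p.2 != p'.2]].

Definition maximal_matching (A B : pred nat) (M : seq (nat * nat)) : Prop :=
  matching A B M /\
  forall x y, A x -> B y -> x != y ->
    exists2 p, p \in M & [|| x == p.1, x == p.2, y == p.1 | y == p.2].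

(* Main.v *)
Require Import Defs.
From mathcomp Require Import all_boot all_order all_algebra.
From mathcomp Require Import zify ring lra.
From Stdlib Require Import Classical.
Import Order.TTheory GRing.Theory Num.Theory.
Set Implicit Arguments. Unset Strict Implicit. Unset Printing Implicit Defensive.

Section Walks.
Variable V : finType.
Variable w : {set V} -> nat.
Implicit Types (F G : {set {set V}}) (x y : V) (s : seq V).

Definition edgs x s : seq {set V} := [seq [set p.1; p.2] | p <- zip (x :: s) s].

Lemma edgs_nil x : edgs x [::] = [::]. Proof. by []. Qed.
Lemma edgs_cons x y s : edgs x (y :: s) = [set x; y] :: edgs y s.
Proof. by []. Qed.

Lemma edgs_cat x s1 s2 : edgs x (s1 ++ s2) = edgs x s1 ++ edgs (last x s1) s2.
Proof. by elim: s1 x => [|y s1 IH] x //=; rewrite !edgs_cons IH. Qed.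

Lemma edgs_rcons x s y : edgs x (rcons s y) = rcons (edgs x s) [set last x s; y].
Proof. by rewrite -cats1 edgs_cat cats1. Qed.

Lemma walkE F x s : walk F x s = all (fun e => e \in F) (edgs x s).
Proof. by elim: s x => [|y s IH] x //=; rewrite -IH. Qed.

Lemma wsumE x s : wsum w x s = \sum_(e <- edgs x s) w e.
Proof. by rewrite /wsum /edgs big_map. Qed.

Lemma wsum_nil x : wsum w x [::] = 0.
Proof. by rewrite wsumE big_nil. Qed.

Lemma wsum_cons x y s : wsum w x (y :: s) = w [set x; y] + wsum w y s.
Proof. by rewrite !wsumE edgs_cons big_cons. Qed.

Lemma wsum_cat x s1 s2 : wsum w x (s1 ++ s2) = wsum w x s1 + wsum w (last x s1) s2.
Proof. by rewrite !wsumE edgs_cat big_cat. Qed.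

Lemma walk_cat F x s1 s2 : walk F x (s1 ++ s2) = walk F x s1 && walk F (last x s1) s2.
Proof. by rewrite /walk cat_path. Qed.

Lemma walk_cons F x y s : walk F x (y :: s) = ([set x; y] \in F) && walk F y s.
Proof. by []. Qed.

Lemma walk_sub F G x s : walk F x s -> (forall e, e \in edgs x s -> e \in F -> e \in G) ->
  walk G x s.
Proof.
rewrite !walkE => /allP H1 H2; apply/allP => e he; exact: H2 _ he (H1 _ he).
Qed.

Lemma walk_rev F x s : walk F x s ->
  exists s', [/\ walk F (last x s) s', last (last x s) s' = x &
                 wsum w (last x s) s' = wsum w x s /\ edgs (last x s) s' =i edgs x s].
Proof.
elim: s x => [|y s IH] x /=.
  by move=> _; exists [::].
case/andP=> hxy /IH [s' [h1 h2 [h3 h4]]].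
exists (rcons s' x); split.
- rewrite /walk rcons_path; apply/andP; split; first exact: h1.
  by rewrite h2 setUC.
- by rewrite last_rcons.
split.
  rewrite -cats1 wsum_cat wsum_cons wsum_nil h2 h3 addn0 wsum_cons addnC.
  by rewrite setUC.
move=> e; rewrite edgs_rcons h2 mem_rcons edgs_cons !inE h4 setUC //.
Qed.

Lemma split_first f x s : f \in edgs x s ->
  exists s1 z s2, [/\ s = s1 ++ z :: s2, [set last x s1; z] = f & f \notin edgs x s1].
Proof.
elim: s x => [|y s IH] x //; rewrite edgs_cons inE.
case: (eqVneq f [set x; y]) => [->|hne] /= h.
  by exists [::], y, s.
have [s1 [z [s2 [-> h2 h3]]]] := IH y h.
exists (y :: s1), z, s2; split => //.
by rewrite edgs_cons inE negb_or hne.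
Qed.

Lemma split_last f x s : f \in edgs x s ->
  exists s1 z s2, [/\ s = s1 ++ z :: s2, [set last x s1; z] = f & f \notin edgs z s2].
Proof.
elim: s x => [|y s IH] x //; rewrite edgs_cons inE.
case: (boolP (f \in edgs y s)) => [h _|hn].
  have [s1 [z [s2 [-> h2 h3]]]] := IH y h.
  by exists (y :: s1), z, s2; split.
move=> /orP [/eqP ef|//].
by exists [::], y, s; split => //; rewrite ef.
Qed.

Definition good (sg : V -> bool) (e : {set V}) := forall a b, e = [set a; b] -> sg a = sg b.

Lemma walk_side (sg : V -> bool) x s :
  (forall e, e \in edgs x s -> good sg e) -> sg (last x s) = sg x.
Proof.
elim: s x => [|y s IH] x //= H.
rewrite IH; first exact: (esym (H _ (mem_head _ _) x y erefl)).
by move=> e he; apply: H; rewrite edgs_cons inE he orbT.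
Qed.

Lemma mem_edgs2 f x s : f \in edgs x s -> exists a b, f = [set a; b] /\ a \in x :: s /\ b \in x :: s.
Proof.
elim: s x => [|y s IH] x //; rewrite edgs_cons inE => /orP [/eqP ->|h].
  by exists x, y; rewrite !inE !eqxx orbT.
have [a [b [-> [ha hb]]]] := IH _ h.
by exists a, b; split => //; split; rewrite inE ?ha ?hb orbT.
Qed.

End Walks.


Section Graph2.
Variable V : finType.
Implicit Types (F G : {set {set V}}) (x y : V) (s : seq V).

Lemma set2_eq (a b c d : V) : [set a; b] = [set c; d] -> (a = c /\ b = d) \/ (a = d /\ b = c).
Proof.
move=> h.
have ha : a \in [set c; d] by rewrite -h !inE eqxx.
have hb : b \in [set c; d] by rewrite -h !inE eqxx orbT.
have hc : c \in [set a; b] by rewrite h !inE eqxx.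
have hd : d \in [set a; b] by rewrite h !inE eqxx orbT.
move: ha hb hc hd; rewrite !inE => /orP[]/eqP ha /orP[]/eqP hb /orP[]/eqP hc /orP[]/eqP hd;
  subst; auto.
Qed.

Lemma count_conn F : connected F -> #|V|.-1 <= #|F|.
Proof.
move=> hc.
case: (pickP (fun _ : V => true)) => [r _|h0]; last first.
  by rewrite (eq_card0 (A := V)) // => x; rewrite /in_mem /= h0.
have ex v : exists n, (fun n => [exists t : n.-tuple V, walk F r t && (last r t == v)]) n.
  have [s [h1 h2]] := hc r v.
  exists (size s); apply/existsP; exists (in_tuple s); by rewrite h1 h2 eqxx.
pose dist v := ex_minn (ex v).
have distP v : exists s, [&& walk F r s, last r s == v & size s == dist v].
  rewrite /dist; case: ex_minnP => n /existsP [t /andP [h1 /eqP h2]] _.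
  by exists t; rewrite size_tuple h1 h2 !eqxx.
have distM v s : walk F r s -> last r s = v -> dist v <= size s.
  move=> h1 h2; rewrite /dist; case: ex_minnP => n _; apply.
  apply/existsP; exists (in_tuple s); by rewrite h1 h2 eqxx.
pose pw v := xchoose (distP v).
have pwP v : [/\ walk F r (pw v), last r (pw v) = v & size (pw v) = dist v].
  by have /and3P [? /eqP ? /eqP ?] := xchooseP (distP v).
pose par v := last r (belast r (pw v)).
pose g v := [set par v; v].
have hg v : v != r -> g v \in F /\ exists s', [/\ walk F r s', last r s' = par v & (size s').+1 = dist v].
  move=> hv; have [h1 h2 h3] := pwP v.
  move: h1 h2 h3; rewrite /g /par.
  case/lastP: (pw v) => [|s' y].
    by move=> _ /= h; rewrite h eqxx in hv.
  rewrite belast_rcons last_rcons /walk rcons_path size_rcons => /andP [h1 h4] h2 h3.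
  subst y; split; first by [].
  by exists s'.
have ginj : {in [set~ r] &, injective g}.
  move=> v v'; rewrite !inE => hv hv' e.
  case: (eqVneq v v') => // hne.
  have [_ [s1 [a1 a2 a3]]] := hg v hv.
  have [_ [s2 [b1 b2 b3]]] := hg v' hv'.
  case: (set2_eq e) => [[e1 e2]|[e1 e2]]; first by rewrite e2 eqxx in hne.
  have := distM _ _ a1 a2; have := distM _ _ b1 b2.
  rewrite e1 -e2; lia.
have -> : #|V|.-1 = #|[set~ r]| by rewrite cardsC1.
rewrite -(card_in_imset ginj); apply: subset_leq_card.
apply/subsetP => e /imsetP [v]; rewrite inE => hv ->.
by case: (hg v); first by move: hv; rewrite inE.
Qed.

Lemma conn_replace F G (c d : V) : connected F -> [set c; d] \in F ->
  (forall e, e \in F -> e != [set c; d] -> e \in G) ->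
  (exists s, walk G c s /\ last c s = d) -> connected G.
Proof.
move=> hF hf hFG [sc [hsc1 hsc2]].
have [sd [hsd1 hsd2 _]] := walk_rev (fun _ => 0) hsc1.
rewrite hsc2 in hsd1 hsd2.
move=> x y; have [s [h1 h2]] := hF x y.
elim: s x h1 h2 => [|z s IH] x.
  by move=> _ <-; exists [::].
rewrite walk_cons => /andP [hxz hs] /= hl.
have [s' [h3 h4]] := IH z hs hl.
case: (eqVneq [set x; z] [set c; d]) => [e|ne].
  case: (set2_eq e) => [[e1 e2]|[e1 e2]]; subst x z.
    exists (sc ++ s'); by rewrite walk_cat last_cat hsc1 hsc2 h3.
  exists (sd ++ s'); by rewrite walk_cat last_cat hsd1 hsd2 h3.
exists (z :: s'); by rewrite walk_cons hFG.
Qed.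

End Graph2.


Section Tree.
Variable V : finType.
Variable w : {set V} -> nat.
Variables E Z : {set {set V}}.
Hypothesis hE : simple_graph E.
Hypothesis hZ : unique_MST w E Z.
Implicit Types (x y : V) (s : seq V).

Lemma edge2 e : e \in E -> exists c d, c != d /\ e = [set c; d].
Proof. by move=> /hE /eqP /cards2P [c [d [h1 h2]]]; exists c, d. Qed.

Lemma ZE : Z \subset E. Proof. by case: hZ => [[]]. Qed.
Lemma Zconn : connected Z. Proof. by case: hZ => [[_ []]]. Qed.
Lemma Zcard : #|Z| = #|V|.-1. Proof. by case: hZ => [[_ []]]. Qed.

Definition sd (f : {set V}) (c v : V) := connect (fun a b => [set a; b] \in Z :\ f) c v.

Lemma sdP f c v : reflect (exists s, walk (Z :\ f) c s /\ last c s = v) (sd f c v).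
Proof.
apply: (iffP connectP) => [[p h1 h2]|[p [h1 h2]]]; first by exists p.
by exists p.
Qed.

Lemma tree_sep c d : [set c; d] \in Z -> c != d ->
  ~ (exists s, walk (Z :\ [set c; d]) c s /\ last c s = d).
Proof.
move=> hf hcd hw.
have hc : connected (Z :\ [set c; d]).
  apply: (conn_replace Zconn hf) => // e he hne; by rewrite !inE hne.
have := count_conn hc.
have := cardsD1 [set c; d] Z; rewrite hf Zcard.
move=> h2; rewrite h2 [true + _]/=. by rewrite ltnn.
Qed.

Lemma sd_sym f a b : sd f a b = sd f b a.
Proof.
apply/idP/idP => /sdP [s [h1 h2]]; have [s' [h3 h4 _]] := walk_rev w h1;
  apply/sdP; exists s'; by rewrite -h2.
Qed.

Lemma sd_edge f c a b : [set a; b] \in Z :\ f -> sd f c a = sd f c b.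
Proof.
move=> h.
have hab : sd f a b by apply: connect1.
apply/idP/idP => h'; first exact: connect_trans h' hab.
have hba : sd f b a by rewrite sd_sym.
exact: connect_trans h' hba.
Qed.

Lemma sd_two c d v : [set c; d] \in Z -> ~~ sd [set c; d] c v -> sd [set c; d] d v.
Proof.
move=> hf hn.
have [s [h1 h2]] := Zconn c v.
case: (boolP ([set c; d] \in edgs c s)) => hin; last first.
  case/negP: hn; apply/sdP; exists s; split => //.
  apply: (walk_sub h1) => e he heZ; rewrite !inE heZ andbT.
  by apply/eqP => ee; move: he; rewrite ee (negbTE hin).
have [s1 [z [s2 [es ez hz]]]] := split_last hin.
move: h1 h2; rewrite es walk_cat last_cat /= => /andP [_ /andP [_ hw]] hl.
have hw' : walk (Z :\ [set c; d]) z s2.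
  apply: (walk_sub hw) => e he heZ; rewrite !inE heZ andbT.
  by apply/eqP => ee; move: he; rewrite ee (negbTE hz).
case: (set2_eq ez) => [[_ ez']|[_ ez']]; subst z.
  apply/sdP; by exists s2.
case/negP: hn; apply/sdP; by exists s2.
Qed.


Lemma exchange c d a b : [set c; d] \in Z -> c != d -> [set a; b] \in E -> [set a; b] \notin Z ->
  sd [set c; d] c a != sd [set c; d] c b -> w [set c; d] < w [set a; b].
Proof.
move=> hf hcd hgE hgZ.
wlog : a b hgE hgZ / sd [set c; d] c a /\ ~~ sd [set c; d] c b.
  move=> hw hne; case ha: (sd [set c; d] c a); move: hne; rewrite ha => hne.
    apply: (hw a b hgE hgZ); last by rewrite ha.
    by split => //; rewrite eq_sym in hne; rewrite (negbTE hne).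
  have hb : sd [set c; d] c b by case: (sd _ c b) hne.
  rewrite [[set a; b]]setUC; apply: (hw b a); rewrite 1?[[set b; a]]setUC //.
    by rewrite ha hb.
  by rewrite ha hb.
case=> ha hb _.
set f := [set c; d]; set g := [set a; b].
set T := g |: (Z :\ f).
have hdb := sd_two hf hb.
have [sa [wa la]] := sdP _ _ _ ha.
have [sb [wb lb]] := sdP _ _ _ hdb.
have [sb' [wb' lb' _]] := walk_rev w wb.
rewrite lb in wb' lb'.
have hT : spanning_tree E T.
  split; [|split].
  - apply/subsetP => e; rewrite !inE => /orP [/eqP ->//|/andP [_ he]].
    exact: (subsetP ZE).
  - apply: (conn_replace Zconn hf).
      by move=> e he hne; rewrite !inE hne he orbT.
    exists (sa ++ b :: sb'); rewrite walk_cat last_cat /= la lb'; split => //.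
    rewrite (walk_sub wa) /=; last by move=> e _ he; rewrite [e \in T]inE he orbT.
    rewrite !inE eqxx /=.
    by apply: (walk_sub wb') => e _ he; rewrite [e \in T]inE he orbT.
  - rewrite cardsU1 !inE negb_and hgZ orbT /= -Zcard (cardsD1 f Z) hf.
    by rewrite [true + _]/= add1n.
have hTZ : T != Z.
  apply/eqP => eT; move: hgZ; rewrite -eT !inE eqxx; by [].
have := (proj2 hZ) T hT hTZ.
rewrite /tweight big_setU1 /=; last by rewrite !inE negb_and hgZ orbT.
rewrite (big_setD1 f hf) /=.
by rewrite ltn_add2r.
Qed.


Lemma notin_edgs (x y z : V) t : x \notin z :: t -> [set x; y] \notin edgs z t.
Proof.
move=> hx; apply/negP => /mem_edgs2 [a [b [e [ha hb]]]].
case: (set2_eq e) => [[ea _]|[ea _]]; subst; by rewrite ?ha ?hb in hx.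
Qed.

Lemma Zedge_neq x y : [set x; y] \in Z -> x != y.
Proof.
move=> h; have := hE (subsetP ZE _ h); apply/contraPneq => ->.
by rewrite setUid cards1.
Qed.

Lemma uniq_walk x s s' : walk Z x s -> walk Z x s' -> uniq (x :: s) -> uniq (x :: s') ->
  last x s = last x s' -> s = s'.
Proof.
elim: s x s' => [|y t IH] x [|y' t'] //=.
- move=> _ _ _ /andP [hx _] hl; by move: hx; rewrite hl mem_last.
- move=> _ _ /andP [hx _] _ hl; by move: hx; rewrite -hl mem_last.
move=> /andP [hxy ht] /andP [hxy' ht'] /andP [hx hu] /andP [hx' hu'] hl.
case: (eqVneq y y') => [eyy|nyy].
  subst y'; congr (_ :: _); exact: (IH y t' ht ht' hu hu' hl).
exfalso; have nxy := Zedge_neq hxy.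
apply: (tree_sep hxy nxy).
have [s'' [w1 l1 [_ e1]]] := walk_rev w ht.
exists ((y' :: t') ++ s''); rewrite last_cat /= -hl l1; split => //.
rewrite walk_cat /= -hl; apply/and3P; split.
  rewrite !inE hxy' andbT; apply/eqP => ee.
  by case: (set2_eq ee) => [[_ ee']|[ee' _]]; [rewrite ee' eqxx in nyy | rewrite ee' eqxx in nxy].
apply: (walk_sub ht') => e he heZ; rewrite !inE heZ andbT.
by apply/eqP => ee; move: he; rewrite ee; apply/negP; apply: notin_edgs.
apply: (walk_sub w1) => e he heZ; rewrite !inE heZ andbT.
by apply/eqP => ee; move: he; rewrite e1 ee; apply/negP; apply: notin_edgs.
Qed.

End Tree.


Lemma arith1 A B C D : 0 < B -> A < B + (C + (D + A)). Proof. lia. Qed.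
Lemma arith2 a b : a <= 0 -> b < a -> False. Proof. lia. Qed.

Section Greedy.
Variable R : numDomainType.
Variable t : R.
Variable V : finType.
Variable w : {set V} -> nat.
Variables E Z H : {set {set V}}.
Variable sq : seq {set V}.
Hypothesis hE : simple_graph E.
Hypothesis hZ : unique_MST w E Z.
Hypothesis hpos : forall e, e \in E -> 0 < w e.
Hypothesis hG : greedy_spanner w t E sq H.

Lemma HE : H \subset E. Proof. by case: hG. Qed.
Lemma memsq e : (e \in sq) = (e \in E).
Proof. by case: hG => hp _ _ _; rewrite (perm_mem hp) mem_enum. Qed.

Lemma index_le_w e f : e \in E -> f \in E -> index e sq <= index f sq -> w e <= w f.
Proof.
case: hG => hp hs _ _ he hf hi.
have he' : e \in sq by rewrite memsq.
have hf' : f \in sq by rewrite memsq.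
have := sorted_leq_nth (leT := fun e f => w e <= w f)
  (fun y x z => @leq_trans (w y) (w x) (w z)) (fun x => leqnn (w x)) set0 hs.
move=> /(_ (index e sq) (index f sq)); rewrite !inE !index_mem !nth_index //.
by move=> /(_ he' hf' hi).
Qed.

Lemma index_inj e f : e \in E -> f \in E -> index e sq = index f sq -> e = f.
Proof.
move=> he hf hi.
have he' : e \in sq by rewrite memsq.
have hf' : f \in sq by rewrite memsq.
by rewrite -(nth_index set0 he') hi nth_index.
Qed.

Lemma good_lem c d g : [set c; d] \in Z -> c != d -> g \in E -> g != [set c; d] ->
  (g \notin Z -> w g <= w [set c; d]) -> good (sd Z [set c; d] c) g.
Proof.
move=> hf hcd hg hne hw a b eg; subst g.
case: (boolP ([set a; b] \in Z)) => hz.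
  by apply: (sd_edge w); rewrite !inE hne hz.
apply/eqP; apply: contraT => hne'.
have := exchange hZ hf hcd hg hz hne'.
by rewrite ltnNge hw.
Qed.

Lemma ZH : Z \subset H.
Proof.
apply/subsetP => z hz; apply: contraT => hzH; suff : False by [].
have hzE : z \in E by apply: (subsetP (ZE hZ)).
have hzs : z \in sq by rewrite memsq.
set k0 := index z sq.
case: hG => _ _ _ /(_ k0); rewrite index_mem hzs nth_index // => /(_ erefl) [_ hiff].
have : ~ (forall x y, z = [set x; y] ->
   dist_gt w [set f in H | index f sq < k0] x y (t * (w z)%:R)).
  by move=> h; move: hzH; rewrite hiff.
move=> /not_all_ex_not [x /not_all_ex_not [y /not_all_ex_not [ez hd]]].
move: hd => /not_all_ex_not [s /not_all_ex_not [hs /not_all_ex_not [hl _]]].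
subst z.
have nxy := Zedge_neq hE hZ hz.
apply: (tree_sep hZ hz nxy); apply/sdP.
have hgood : forall e, e \in edgs x s -> good (sd Z [set x; y] x) e.
  move=> e he; move: hs; rewrite walkE => /allP /(_ _ he); rewrite inE => /andP [heH hi].
  have heE : e \in E by apply: (subsetP HE).
  apply: good_lem => //.
    by apply/eqP => ee; move: hi; rewrite ee ltnn.
  move=> _; apply: index_le_w => //; exact: ltnW.
have := walk_side hgood; rewrite hl => ->; exact: connect0.
Qed.


Lemma step (u v : V) G : [set u; v] \in E -> [set u; v] \notin Z ->
  let F := [set f in H | index f sq < index [set u; v] sq] in
  walk (F :|: Z) u G -> last u G = v -> ~~ all (fun e => e \in F) (edgs u G) ->
  exists G', [/\ walk (F :|: Z) u G', last u G' = v & wsum w u G' < wsum w u G].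
Proof.
move=> hgE hgZ F hw hl /allPn [f hf hfF].
have hfFZ : f \in F :|: Z by move: hw; rewrite walkE => /allP; apply.
have hfZ : f \in Z by move: hfFZ; rewrite inE (negbTE hfF).
have hfE : f \in E by apply: (subsetP (ZE hZ)).
have hfH : f \in H by apply: (subsetP ZH).
have hidx : index [set u; v] sq < index f sq.
  rewrite ltn_neqAle; apply/andP; split.
    apply/eqP => ei; have ee := index_inj hgE hfE ei; by rewrite ee hfZ in hgZ.
  by move: hfF; rewrite inE hfH /= -leqNgt.
have hwf : w [set u; v] <= w f by apply: index_le_w => //; exact: ltnW.
have [c [d [hcd ef]]] := edge2 hE hfE; subst f.
set sg := sd Z [set c; d] c.
have hgood : forall e, e \in edgs u G -> e != [set c; d] -> good sg e.
  move=> e he hne.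
  have heFZ : e \in F :|: Z by move: hw; rewrite walkE => /allP; apply.
  have heE : e \in E.
    move: heFZ; rewrite inE => /orP [|/(subsetP (ZE hZ))//].
    by rewrite inE => /andP [/(subsetP HE)].
  apply: good_lem => // heZ.
  move: heFZ; rewrite inE (negbTE heZ) orbF inE => /andP [_ hi].
  apply: leq_trans hwf; apply: index_le_w => //; exact: ltnW.
have hg0 : good sg [set u; v].
  apply: good_lem => //.
    by apply/eqP => ee; rewrite ee hfZ in hgZ.
have huv := hg0 u v erefl.
have hc : sg c by exact: connect0.
have hd : ~~ sg d.
  apply/negP => /sdP hh; exact: (tree_sep hZ hfZ hcd hh).
have hsame : forall p q, p \in [set c; d] -> q \in [set c; d] -> sg p = sg q -> p = q.
  move=> p q; rewrite !inE => /orP [] /eqP -> /orP [] /eqP -> //.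
    by move=> e; move: hd; rewrite -e hc.
  by move=> e; move: hd; rewrite e hc.
have [s1 [z [s2 [eG ez hz]]]] := split_first hf.
subst G.
move: hw hl hgood; rewrite walk_cat walk_cons last_cat /= edgs_cat edgs_cons.
move=> /and3P [hw1 _ hw2] hl hgood.
set p := last u s1 in ez hgood hw2 *.
have hp : sg p = sg u.
  apply: walk_side => e he; apply: hgood; first by rewrite mem_cat he.
  by apply/eqP => ee; move: he; rewrite ee (negbTE hz).
have hpin : p \in [set c; d] by rewrite -ez !inE eqxx.
have hzin : z \in [set c; d] by rewrite -ez !inE eqxx orbT.
have hpz : sg p != sg z.
  apply/eqP => e; have epz := hsame _ _ hpin hzin e.
  by case: (set2_eq ez) => [[e1 e2]|[e1 e2]]; move: hcd; rewrite -e1 -e2 epz eqxx.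
have hz2 : [set c; d] \in edgs z s2.
  apply: contraT => hn; case/negP: hpz.
  rewrite hp huv -hl; apply/eqP; apply: walk_side => e he.
  apply: hgood; first by rewrite mem_cat inE he !orbT.
  by apply/eqP => ee; move: he; rewrite ee (negbTE hn).
have [s3 [z' [s4 [es2 ez' hz']]]] := split_last hz2.
subst s2.
move: hw2 hl hgood; rewrite walk_cat walk_cons last_cat /= edgs_cat edgs_cons.
move=> /and3P [hw3 _ hw4] hl hgood.
have hz'v : sg z' = sg v.
  rewrite -hl; apply: esym; apply: walk_side => e he.
  apply: hgood; first by rewrite mem_cat inE mem_cat inE he !orbT.
  by apply/eqP => ee; move: he; rewrite ee (negbTE hz').
have hz'in : z' \in [set c; d] by rewrite -ez' !inE eqxx orbT.
have ez'p : z' = p by apply: hsame => //; rewrite hz'v -huv hp.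
exists (s1 ++ s4); split.
- by rewrite walk_cat hw1 /= -/p -ez'p.
- by rewrite last_cat -/p -ez'p.
rewrite !wsum_cat !wsum_cons -/p -ez'p ltn_add2l wsum_cat wsum_cons.
have hB : 0 < w [set z'; z] by rewrite ez'p; apply: hpos; rewrite ez.
move: hB; move: (w [set z'; z]) (wsum w z s3) (w [set last z s3; z']) (wsum w z' s4).
move=> B C D A hB; exact: arith1.
Qed.

Lemma descent (u v : V) n G : [set u; v] \in E -> [set u; v] \notin Z ->
  let F := [set f in H | index f sq < index [set u; v] sq] in
  wsum w u G <= n -> walk (F :|: Z) u G -> last u G = v ->
  exists G', [/\ walk F u G', last u G' = v & wsum w u G' <= wsum w u G].
Proof.
move=> hgE hgZ F; elim: n G => [|n IH] G hn hw hl.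
  case: (boolP (all (fun e => e \in F) (edgs u G))) => ha.
    by exists G; split => //; rewrite walkE.
  have [G' [_ _ hlt]] := step hgE hgZ hw hl ha; exfalso; exact: arith2 hn hlt.
case: (boolP (all (fun e => e \in F) (edgs u G))) => ha.
  by exists G; split => //; rewrite walkE.
have [G' [h1 h2 hlt]] := step hgE hgZ hw hl ha.
have [G'' [h3 h4 h5]] := IH G' (leq_trans (hlt : _ < _) hn) h1 h2.
exists G''; split => //; apply: leq_trans h5 (ltnW hlt).
Qed.

End Greedy.


Lemma ar_seg (a b c d x : nat) : a <= x <= c -> c = a + d -> (x - a) + b = d -> b = c - x.
Proof. lia. Qed.

Lemma ar_tot (x a b x' : nat) : x <= a -> a <= b -> b <= x' ->
  (a - x) + ((b - a) + (x' - b)) <= (x - x') + (x' - x).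
Proof. lia. Qed.
Lemma ar_same (e x x' t : nat) : e <= x -> e <= x' -> (x - e) + t = (x' - e) ->
  t <= (x - x') + (x' - x).
Proof. lia. Qed.

Lemma prefix_cat (T : eqType) (s1 s2 s1' s2' : seq T) : s1 ++ s2 = s1' ++ s2' ->
  size s1 <= size s1' -> s1' = s1 ++ drop (size s1) s1'.
Proof.
move=> e h.
have : take (size s1) (s1 ++ s2) = take (size s1) (s1' ++ s2') by rewrite e.
rewrite take_size_cat // takel_cat // => e1.
by rewrite {1}e1 cat_take_drop.
Qed.

Section Geom.
Variable V : finType.
Variable w : {set V} -> nat.
Variables E Z : {set {set V}}.
Variable vs : seq V.
Variable ell : nat -> nat.
Hypothesis hE : simple_graph E.
Hypothesis hZ : unique_MST w E Z.
Hypothesis hvs : size vs = #|V|.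
Hypothesis hell : forall j x0, j.+1 < #|V| ->
     exists2 d, tree_dist w Z (nth x0 vs j) (nth x0 vs j.+1) d & ell j.+1 = ell j + d.

Lemma seg x0 u x : on_P w Z vs ell u x -> exists j s1 s2,
  [/\ j.+1 < #|V|, ell j <= x <= ell j.+1,
      walk Z (nth x0 vs j) (s1 ++ s2) /\ uniq (nth x0 vs j :: s1 ++ s2),
      last (nth x0 vs j) s1 = u /\ last u s2 = nth x0 vs j.+1 &
      wsum w (nth x0 vs j) s1 = x - ell j /\ wsum w u s2 = ell j.+1 - x].
Proof.
move=> [j [hj hx [s1 [s2 [[w1 l1] [w2 l2] hu hws]]]]].
rewrite (set_nth_default x0 u (ltnW hj)) (set_nth_default x0 u hj) in w1 l1 l2 hu hws.
rewrite hvs in hj.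
have [d [sg [ws ls us wss]] hd] := @hell j x0 hj.
have hw : walk Z (nth x0 vs j) (s1 ++ s2) by rewrite walk_cat w1 l1.
have hl : last (nth x0 vs j) (s1 ++ s2) = nth x0 vs j.+1 by rewrite last_cat l1.
have esg := uniq_walk hE hZ hw ws hu us (etrans hl (esym ls)).
exists j, s1, s2; split => //.
split => //.
move: wss; rewrite -esg wsum_cat l1 hws => h.
exact: (ar_seg hx hd h).
Qed.

Lemma chain x0 j k : j + k < #|V| -> exists s,
  [/\ walk Z (nth x0 vs j) s, last (nth x0 vs j) s = nth x0 vs (j + k),
      wsum w (nth x0 vs j) s = ell (j + k) - ell j & ell j <= ell (j + k)].
Proof.
elim: k => [|k IH] h.
  by exists [::]; rewrite addn0 subnn wsum_nil.
rewrite addnS in h.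
have [s [h1 h2 h3 h4]] := IH (ltnW h).
have [d [sg [ws ls _ wss]] hd] := @hell (j + k) x0 h.
exists (s ++ sg); rewrite walk_cat last_cat h1 h2 ws ls wsum_cat h3 h2 wss -addnS.
rewrite addnS hd; split => //.
  by move: h4; clear; lia.
by move: h4; clear; lia.
Qed.


Definition D (x x' : nat) := (x - x') + (x' - x).

Lemma cross x0 j j' u x u' x' s2 s1' : j < j' -> j'.+1 < #|V| ->
  x <= ell j.+1 -> ell j' <= x' ->
  walk Z u s2 -> last u s2 = nth x0 vs j.+1 -> wsum w u s2 = ell j.+1 - x ->
  walk Z (nth x0 vs j') s1' -> last (nth x0 vs j') s1' = u' -> wsum w (nth x0 vs j') s1' = x' - ell j' ->
  exists s, [/\ walk Z u s, last u s = u' & wsum w u s <= D x x'].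
Proof.
move=> hjj hj' hx hx' w2 l2 ws2 w1 l1 ws1.
have [k ek] : exists k, j' = j.+1 + k by exists (j' - j.+1); rewrite subnKC.
subst j'.
have [sc [wc lc wsc hle]] := chain x0 (ltnW hj').
exists (s2 ++ sc ++ s1'); split.
- by rewrite walk_cat w2 l2 walk_cat wc lc.
- by rewrite !last_cat l2 lc.
rewrite !wsum_cat l2 lc ws2 wsc ws1; exact: ar_tot.
Qed.

Lemma same x0 j u x u' x' s1 s2 s1' s2' :
  walk Z (nth x0 vs j) (s1 ++ s2) -> uniq (nth x0 vs j :: s1 ++ s2) ->
  last (nth x0 vs j) s1 = u -> last u s2 = nth x0 vs j.+1 ->
  walk Z (nth x0 vs j) (s1' ++ s2') -> uniq (nth x0 vs j :: s1' ++ s2') ->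
  last (nth x0 vs j) s1' = u' -> last u' s2' = nth x0 vs j.+1 ->
  wsum w (nth x0 vs j) s1 = x - ell j -> wsum w (nth x0 vs j) s1' = x' - ell j ->
  ell j <= x -> ell j <= x' ->
  (exists s, [/\ walk Z u s, last u s = u' & wsum w u s <= D x x']) \/
  (exists s, [/\ walk Z u' s, last u' s = u & wsum w u' s <= D x' x]).
Proof.
move=> w1 u1 l1 l2 w1' u1' l1' l2' ws1 ws1' hx hx'.
have e : s1 ++ s2 = s1' ++ s2'.
  apply: (uniq_walk hE hZ w1 w1' u1 u1'); by rewrite !last_cat l1 l2 l1' l2'.
case: (leqP (size s1) (size s1')) => hs.
- left; have e1 := prefix_cat e hs.
  move: w1' l1' ws1'; rewrite walk_cat e1 walk_cat last_cat wsum_cat l1 ws1.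
  move=> /andP [/andP [_ hw] _] hl hws.
  exists (drop (size s1) s1'); split => //; exact: ar_same hws.
- right; have e1 := prefix_cat (esym e) (ltnW hs).
  move: w1 l1 ws1; rewrite walk_cat e1 walk_cat last_cat wsum_cat l1' ws1'.
  move=> /andP [/andP [_ hw] _] hl hws.
  exists (drop (size s1') s1); split => //; exact: ar_same hws.
Qed.

Lemma Dsym x x' : D x x' = D x' x. Proof. by rewrite /D addnC. Qed.

Lemma rev_to u u' x x' : (exists s, [/\ walk Z u' s, last u' s = u & wsum w u' s <= D x' x]) ->
  exists s, [/\ walk Z u s, last u s = u' & wsum w u s <= D x x'].
Proof.
move=> [s [h1 h2 h3]]; have [s' [h4 h5 [h6 _]]] := walk_rev w h1.
rewrite h2 in h4 h5 h6; exists s'; by rewrite h6 Dsym.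
Qed.

Lemma pos_walk u x u' x' : on_P w Z vs ell u x -> on_P w Z vs ell u' x' ->
  exists s, [/\ walk Z u s, last u s = u' & wsum w u s <= D x x'].
Proof.
move=> h h'.
have [j [s1 [s2 [hj /andP [hx1 hx2] [w1 u1] [l1 l2] [ws1 ws2]]]]] := seg u h.
have [j' [s1' [s2' [hj' /andP [hx1' hx2'] [w1' u1'] [l1' l2'] [ws1' ws2']]]]] := seg u h'.
have w1s := w1; have w1s' := w1'.
move: w1s w1s'; rewrite !walk_cat l1 l1' => /andP [wa wb] /andP [wa' wb'].
case: (ltngtP j j') => hjj.
- exact: (cross hjj hj' hx2 hx1' wb l2 ws2 wa' l1' ws1').
- apply: rev_to; exact: (cross hjj hj hx2' hx1 wb' l2' ws2' wa l1 ws1).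
- subst j'.
  case: (same w1 u1 l1 l2 w1' u1' l1' l2' ws1 ws1' hx1 hx1') => //.
  exact: rev_to.
Qed.

End Geom.


Lemma arD (h h' x x' m B : nat) : 0 < h -> 0 < h' -> h.-1 * m <= x <= h * m ->
  h'.-1 * m <= x' <= h' * m -> h <= h' + B -> h' <= h + B ->
  (x - x') + (x' - x) <= (B + 1) * m.
Proof.
move=> h0 h0' /andP [a1 a2] /andP [b1 b2] c1 c2.
have e1 : h.-1 * m + m = h * m by rewrite -mulSnr prednK.
have e2 : h'.-1 * m + m = h' * m by rewrite -mulSnr prednK.
have d1 : h * m <= h' * m + B * m by rewrite -mulnDl leq_mul2r c1 orbT.
have d2 : h' * m <= h * m + B * m by rewrite -mulnDl leq_mul2r c2 orbT.
rewrite mulnDl mul1n.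
move: e1 e2 d1 d2 a1 a2 b1 b2.
move: (h.-1 * m) (h * m) (h'.-1 * m) (h' * m) (B * m) => A1 A2 A3 A4 A5.
lia.
Qed.

Lemma arNb (q h h' bb bb' : nat) : (`|q%:Z - h%:Z| <= bb%:Z)%R -> (`|q%:Z - h'%:Z| <= bb'%:Z)%R ->
  h <= h' + (bb + bb') /\ h' <= h + (bb + bb').
Proof. move=> a b; lia. Qed.

Section RR.
Local Open Scope ring_scope.
Lemma ar_final (R : realFieldType) (a eps bb bb' m we we' W K : R) : 0 < a -> 0 < eps ->
  0 <= bb -> 0 <= bb' -> bb * a <= we -> bb' * a <= we' -> m = eps * a / 8 ->
  we <= we' -> a <= we' -> 3 <= K -> W <= 2 * ((bb + bb' + 1) * m) + we ->
  W <= K * (1 + eps) * we'.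
Proof.
move=> ha he hb hb' h1 h2 hm h3 h4 hK hW.
have hm' : 2 * ((bb + bb' + 1) * m) = eps * (bb * a + bb' * a + a) / 4.
  by rewrite hm; field.
have h5 : eps * (bb * a + bb' * a + a) <= eps * (3 * we').
  rewrite ler_pM2l //; clear hm hm' hW; move: h1 h2; move: (bb * a) (bb' * a) => X Y h1 h2; lra.
have h6 : 0 <= we' by lra.
have h7 : 3 * (1 + eps) * we' <= K * (1 + eps) * we'.
  apply: ler_wpM2r => //; apply: ler_wpM2r => //; lra.
have e1 : eps * (3 * we') = 3 * (eps * we') by ring.
have e2 : 3 * (1 + eps) * we' = 3 * we' + 3 * (eps * we') by ring.
have hQ : 0 <= eps * we' by apply: mulr_ge0; lra.
rewrite hm' in hW; rewrite e1 in h5; rewrite e2 in h7.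
clear e1 e2 hm' hm h1 h2.
move: hW h5 h7 hQ; move: (eps * (bb * a + bb' * a + a)) (eps * we') (K * (1 + eps) * we') => P Q S.
lra.
Qed.

Lemma ar_apos (R : realFieldType) (K x a : R) : 0 <= K -> 0 < x -> x <= K * a -> 0 < a.
Proof.
move=> hK hx h; rewrite ltNge; apply/negP => ha.
have : K * a <= 0 by rewrite pmulr_rle0 //; nra.
lra.
Qed.
End RR.

Unset Implicit Arguments. Set Strict Implicit.

Lemma ar_k (k : nat) : 2 <= k -> 3 <= 2 * k - 1.
Proof. move=> h; lia. Qed.

Lemma ar_sum (A W B C m : nat) : A <= m -> C <= m -> W <= A + (B + C) -> W <= 2 * m + B.
Proof.
move=> h1 h2 h3; lia.
Qed.

Theorem proposition2
  (R : archiRealFieldType) (V : finType) (E : {set {set V}}) (w : {set V} -> nat)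
  (Z : {set {set V}}) (k : nat) (eps : R)
  (sq : seq {set V}) (H : {set {set V}})
  (vs : seq V) (ell : nat -> nat) (i s m : nat)
  (orient : {set V} -> V * V) (hI jI : {set V} -> nat)
  (M : {set V} -> seq (nat * nat)) :
  simple_graph E -> connected E ->
  (forall e, e \in E -> 0 < w e) ->
  unique_MST w E Z ->
  2 <= k -> (0 < eps)%R ->
  greedy_spanner w (((2 * k - 1)%:R * (1 + eps))%R) E sq H ->
  preorder Z vs ->
  ell 0 = 0 ->
  (forall j x0, j.+1 < #|V| ->
     exists2 d, tree_dist w Z (nth x0 vs j) (nth x0 vs j.+1) d & ell j.+1 = ell j + d) ->
  let L := ell (#|V|.-1) in
  1 <= i <= up_log k #|V| ->
  let a : R := ((k ^ i.-1)%:R * L%:R / #|V|%:R)%R in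
  (s%:R = 8 * L%:R / (eps * a))%R ->
  (m%:R = eps * a / 8)%R ->
  let Ei := [set e in H :\: Z | (a < (w e)%:R <= k%:R * a)%R] in
  (forall e, e \in Ei ->
     let b := Num.floor ((w e)%:R / a)%R in
     [/\ e = [set (orient e).1; (orient e).2],
         1 <= hI e <= s, 1 <= jI e <= s,
         in_I w Z vs ell m (hI e) (orient e).1 /\
         in_I w Z vs ell m (jI e) (orient e).2 &
         maximal_matching (Nb s b (hI e)) (Nb s b (jI e)) (M e)]) ->
  forall e e', e \in Ei -> e' \in Ei -> e != e' ->
  forall p p', p \in M e -> p' \in M e' ->
    ~ ((p.1 = p'.1 /\ p.2 = p'.2) \/ (p.1 = p'.2 /\ p.2 = p'.1)).
Proof.
move=> hE hcon hpos hZ hk heps hG hpre hell0 hell L hi a hs hm Ei hEi.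
have hvs : size vs = #|V| by case: hpre.
have hEiP : forall f, f \in Ei -> [/\ f \in H, f \notin Z, (a < (w f)%:R)%R & ((w f)%:R <= k%:R * a)%R].
  by move=> f; rewrite !inE => /andP [/andP [hZ' hH] /andP [h1 h2]].
have hHE := HE hG.
have key : forall e e' p p', e \in Ei -> e' \in Ei -> index e sq < index e' sq ->
    p \in M e -> p' \in M e' ->
    ~ ((p.1 = p'.1 /\ p.2 = p'.2) \/ (p.1 = p'.2 /\ p.2 = p'.1)).
  move=> e e' p p' he he' hlt hp hp' hor.
  have [hH hnZ hlo hup] := hEiP e he.
  have [hH' hnZ' hlo' hup'] := hEiP e' he'.
  have hEe := subsetP hHE _ hH.
  have hEe' := subsetP hHE _ hH'.
  have hwpos : (0 < (w e)%:R :> R)%R by rewrite ltr0n hpos.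
  have ha : (0 < a)%R := ar_apos (ler0n _ k) hwpos hup.
  have hfl : forall f, f \in Ei -> exists bb : nat,
      (Num.floor ((w f)%:R / a) = Posz bb)%R /\ (bb%:R * a <= (w f)%:R)%R.
    move=> f hf.
    have h0 : (0 <= (w f)%:R / a)%R by rewrite divr_ge0 // ltW.
    have := floor_le ((w f)%:R / a).
    rewrite -floor_ge0 in h0; move: h0.
    case: (Num.floor _) => [n|n] // _ hle; exists n; split => //.
    by rewrite -ler_pdivlMr.
  have [bb [ebb hbb]] := hfl e he.
  have [bb' [ebb' hbb']] := hfl e' he'.
  have [ee hhI hjI [hiu hiv] hmm] := hEi e he.
  have [ee' hhI' hjI' [hiu' hiv'] hmm'] := hEi e' he'.
  move: hmm hmm' => [[_ hmem _] _] [[_ hmem' _] _].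
  have [n1 n2 _] := hmem p hp.
  have [n1' n2' _] := hmem' p' hp'.
  move: n1 n2 n1' n2'; rewrite /Nb ebb ebb'.
  move=> /andP [_ n1] /andP [_ n2] /andP [_ n1'] /andP [_ n2'].
  have fin : forall al be A Bw, walk Z (orient e').1 A -> last (orient e').1 A = al ->
      [set al; be] = e -> walk Z be Bw -> last be Bw = (orient e').2 ->
      wsum w (orient e').1 A <= (bb + bb' + 1) * m -> wsum w be Bw <= (bb + bb' + 1) * m -> False.
    move=> al be A Bw wA lA eab wB lB sA sB.
    have hu'v' : [set (orient e').1; (orient e').2] \in E by rewrite -ee'.
    have hu'v'Z : [set (orient e').1; (orient e').2] \notin Z by rewrite -ee'.
    have hwG : walk ([set f in H | index f sq < index [set (orient e').1; (orient e').2] sq] :|: Z)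
        (orient e').1 (A ++ be :: Bw).
      rewrite walk_cat lA walk_cons; apply/and3P; split.
      - by apply: (walk_sub wA) => f _ hf; rewrite inE hf orbT.
      - by rewrite eab inE; apply/orP; left; rewrite inE hH /= -ee'.
      - by apply: (walk_sub wB) => f _ hf; rewrite inE hf orbT.
    have hlG : last (orient e').1 (A ++ be :: Bw) = (orient e').2 by rewrite last_cat lA /= lB.
    have [G' [wG' lG' sG']] := descent hE hZ hpos hG hu'v' hu'v'Z (leqnn _) hwG hlG.
    rewrite -ee' in wG'.
    have k0lt : index e' sq < size sq by rewrite index_mem (memsq hG).
    have hd : dist_gt w [set f in H | index f sq < index e' sq] (orient e').1 (orient e').2
        (((2 * k - 1)%:R * (1 + eps)) * (w e')%:R)%R.
      have [_ _ _ hG4] := hG; move: (hG4 _ k0lt); rewrite nth_index; last by rewrite (memsq hG).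
      move=> -[h1 _].
      exact: h1 hH' _ _ ee'.
    have hlt' := hd G' wG' lG'.
    have N : wsum w (orient e').1 G' <= 2 * ((bb + bb' + 1) * m) + w e.
      apply: (ar_sum _ _ _ _ _ sA sB); apply: (leq_trans sG').
      by rewrite wsum_cat lA wsum_cons eab.
    have NR : ((wsum w (orient e').1 G')%:R <= 2 * ((bb%:R + bb'%:R + 1) * m%:R) + (w e)%:R :> R)%R.
      move: N; rewrite -(ler_nat R) !natrD !natrM !natrD addr0 => h.
      by rewrite mulr_natl mulr2n.
    have hwe : ((w e)%:R <= (w e')%:R :> R)%R.
      by rewrite ler_nat; apply: (index_le_w hG hEe hEe' (ltnW hlt)).
    have hK : (3 <= (2 * k - 1)%:R :> R)%R by rewrite (ler_nat R 3); apply: ar_k.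
    have := ar_final ha heps (ler0n _ bb) (ler0n _ bb') hbb hbb' hm hwe (ltW hlo') hK NR.
    by move=> hfin; have := lt_le_trans hlt' hfin; rewrite ltxx.
  have [x [hx Px]] := hiu.
  have [y [hy Py]] := hiv.
  have [x' [hx' Px']] := hiu'.
  have [y' [hy' Py']] := hiv'.
  move: hhI hjI hhI' hjI' => /andP [h0 _] /andP [j0 _] /andP [h0' _] /andP [j0' _].
  case: hor => [[e1 e2]|[e1 e2]].
  - rewrite -e1 in n1'; rewrite -e2 in n2'.
    have [c1 c2] := arNb n1 n1'.
    have [d1 d2] := arNb n2 n2'.
    have [A [wA lA sA]] := pos_walk hE hZ hvs hell Px' Px.
    have [Bw [wB lB sB]] := pos_walk hE hZ hvs hell Py Py'.
    apply: (fin _ _ A Bw wA lA (esym ee) wB lB).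
    + apply: (leq_trans sA); exact: arD h0' h0 hx' hx c2 c1.
    + apply: (leq_trans sB); exact: arD j0 j0' hy hy' d1 d2.
  - rewrite -e1 in n2'; rewrite -e2 in n1'.
    have [c1 c2] := arNb n1 n2'.
    have [d1 d2] := arNb n2 n1'.
    have [A [wA lA sA]] := pos_walk hE hZ hvs hell Px' Py.
    have [Bw [wB lB sB]] := pos_walk hE hZ hvs hell Px Py'.
    apply: (fin _ _ A Bw wA lA _ wB lB).
    + by rewrite setUC -ee.
    + apply: (leq_trans sA); exact: arD h0' j0 hx' hy d2 d1.
    + apply: (leq_trans sB); exact: arD h0 j0' hx hy' c1 c2.
move=> e e' he he' hne p p' hp hp'.
have [hH _ _ _] := hEiP e he.
have [hH' _ _ _] := hEiP e' he'.
case: (ltngtP (index e sq) (index e' sq)) => hij.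
- exact: (key e e' p p' he he' hij hp hp').
- move=> hor; apply: (key e' e p' p he' he hij hp' hp).
  by case: hor => [[h1 h2]|[h1 h2]]; [left|right].
- by move: hne; rewrite (index_inj hG (subsetP hHE _ hH) (subsetP hHE _ hH') hij) eqxx.
Qed.
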